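(* Let $i\in\{1,2\}$, let $(X,e_X,\mu_X)$ be an $\mathrm{NP}_i$-digital H-space, and let $(Y,e_Y)$ be a pointed digital image such that there are pointed continuous maps $f:(X,e_X)\to(Y,e_Y)$ and $g:(Y,e_Y)\to(X,e_X)$ with $g\circ f\simeq_i\mathrm{id}_X$ and $f\circ g\simeq_i\mathrm{id}_Y$. Define $\mu_Y=f\circ\mu_X\circ(g\times g):Y\times Y\to Y$. Then $(Y,e_Y,\mu_Y)$ is an $\mathrm{NP}_i$-digital H-space, and $(X,e_X,\mu_X)$ and $(Y,e_Y,\mu_Y)$ are H-equivalent (via $f$ and $g$).
   Context: A digital image is a finite set $X\subset\mathbb{Z}^n$ with a reflexive symmetric adjacency relation (a finite reflexive graph); continuous maps send adjacent points to adjacent points. On products, $\mathrm{NP}_u$ declares two tuples adjacent iff coordinates are adjacent in at most $u$ positions and equal elsewhere. An $\mathrm{NP}_i$-homotopy from $f$ to $g:X\to Y$ is an $\mathrm{NP}_i$-continuous $H:X\times[0,m]_{\mathbb{Z}}\to Y$ with $H(\cdot,0)=f$, $H(\cdot,m)=g$; write $f\simeq_i g$ (when $X$ is itself a product it carries the $\mathrm{NP}_i$ adjacency). $(f,g)(x)=(f(x),g(x))$, $(f\times g)(x,y)=(f(x),g(y))$; $c_e$ is the constant map at $e$. Pointed map: sends base point to base point. An $\mathrm{NP}_i$-digital H-space is $(X,e,\mu)$ with $\mu:X\times X\to X$ $\mathrm{NP}_i$-continuous, $\mu\circ(\mathrm{id}_X,c_e)\simeq_i\mathrm{id}_X$ and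 $\mu\circ(c_e,\mathrm{id}_X)\simeq_i\mathrm{id}_X$ (homotopies need not be pointed). Two $\mathrm{NP}_i$-digital H-spaces $(X,e_X,\mu_X)$, $(Y,e_Y,\mu_Y)$ are H-equivalent if there are continuous pointed maps $f:(X,e_X)\to(Y,e_Y)$, $g:(Y,e_Y)\to(X,e_X)$ with $f\circ g\simeq_i\mathrm{id}_Y$, $g\circ f\simeq_i\mathrm{id}_X$, $f\circ\mu_X\simeq_i\mu_Y\circ(f\times f)$ and $g\circ\mu_Y\simeq_i\mu_X\circ(g\times g)$. *)

(* Defs.v *)
From mathcomp Require Import all_boot.
Set Implicit Arguments. Unset Strict Implicit. Unset Printing Implicit Defensive.

Record dimg := DImg {
  carrier :> finType;
  adj : rel carrier;
  adj_refl : reflexive adj;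
  adj_sym : symmetric adj }.

Definition dcont (X Y : dimg) (f : X -> Y) : Prop :=
  forall x y, adj x y -> adj (f x) (f y).

Definition np_adj (u : nat) (X Y : dimg) : rel (X * Y)%type :=
  fun p q => [&& adj p.1 q.1, adj p.2 q.2 &
                 ((p.1 != q.1) + (p.2 != q.2) <= u)%N].

Lemma np_adj_refl u X Y : reflexive (@np_adj u X Y).
Proof. by move=> [x y]; rewrite /np_adj /= !adj_refl !eqxx. Qed.

Lemma np_adj_sym u X Y : symmetric (@np_adj u X Y).
Proof.
move=> [x y] [x' y']; rewrite /np_adj /=.
by rewrite (adj_sym x) (adj_sym y) (eq_sym x) (eq_sym y).
Qed.

Definition NP (u : nat) (X Y : dimg) : dimg :=
  @DImg (X * Y)%type (@np_adj u X Y) (@np_adj_refl u X Y) (@np_adj_sym u X Y).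

Definition iadj (m : nat) : rel 'I_m.+1 :=
  fun a b => ((a <= b.+1) && (b <= a.+1))%N.

Lemma iadj_refl (m : nat) : reflexive (@iadj m).
Proof. by move=> a; rewrite /iadj leqnSn. Qed.

Lemma iadj_sym (m : nat) : symmetric (@iadj m).
Proof. by move=> a b; rewrite /iadj andbC. Qed.

Definition dint (m : nat) : dimg := @DImg 'I_m.+1 (@iadj m) (@iadj_refl m) (@iadj_sym m).

(* NP_i-homotopy from f to g: an NP_i-continuous H : X x [0,m]_Z -> Y
   (X carrying its own adjacency, which is NP_i when X is a product). *)
Definition homotopic (i : nat) (X Y : dimg) (f g : X -> Y) : Prop :=
  exists (m : nat) (H : (X * 'I_m.+1)%type -> Y),
    [/\ @dcont (NP i X (dint m)) Y H,
        forall x, H (x, ord0) = f x &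
        forall x, H (x, ord_max) = g x].

(* NP_i-digital H-space (homotopies need not be pointed). *)
Definition is_Hspace (i : nat) (X : dimg) (e : X) (mu : (X * X)%type -> X) : Prop :=
  [/\ @dcont (NP i X X) X mu,
      homotopic i (fun x => mu (x, e)) id &
      homotopic i (fun x => mu (e, x)) id].

Definition H_equiv_via (i : nat) (X : dimg) (eX : X) (muX : (X * X)%type -> X)
    (Y : dimg) (eY : Y) (muY : (Y * Y)%type -> Y) (f : X -> Y) (g : Y -> X) : Prop :=
  [/\ dcont f /\ f eX = eY,
      dcont g /\ g eY = eX,
      homotopic i (f \o g) id /\ homotopic i (g \o f) id,
      @homotopic i (NP i X X) Y (f \o muX) (fun p => muY (f p.1, f p.2)) &
      @homotopic i (NP i Y Y) X (g \o muY) (fun p => muX (g p.1, g p.2))].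

(* Main.v *)
Require Import Defs.
From mathcomp Require Import all_boot zify.
Set Implicit Arguments. Unset Strict Implicit. Unset Printing Implicit Defensive.

Lemma neq_le (T U : eqType) (h : T -> U) x y : ((h x != h y) <= (x != y))%N.
Proof. by case: (x =P y) => [->|_]; rewrite ?eqxx // leq_b1. Qed.

Lemma hom_ext i (X Y : dimg) (f f' g g' : X -> Y) :
  homotopic i f g -> f =1 f' -> g =1 g' -> homotopic i f' g'.
Proof.
move=> [m [H [Hc H0 H1]]] ef eg; exists m, H; split=> // x.
by rewrite H0 ef. by rewrite H1 eg.
Qed.

Lemma hom_post i (X Y Z : dimg) (f g : X -> Y) (k : Y -> Z) :
  dcont k -> homotopic i f g -> homotopic i (k \o f) (k \o g).
Proof.
move=> kc [m [H [Hc H0 H1]]]; exists m, (k \o H); split.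
- by move=> p q pq; apply: kc; apply: Hc.
- by move=> x /=; rewrite H0.
- by move=> x /=; rewrite H1.
Qed.

Lemma hom_pre i (W X Y : dimg) (f g : X -> Y) (h : W -> X) :
  dcont h -> homotopic i f g -> homotopic i (f \o h) (g \o h).
Proof.
move=> hc [m [H [Hc H0 H1]]]; exists m, (fun p => H (h p.1, p.2)); split.
- move=> [w t] [w' t']; rewrite /= /np_adj /= => /and3P [ww tt c].
  apply: Hc; rewrite /= /np_adj /= (hc _ _ ww) tt /=.
  exact: leq_trans (leq_add (neq_le h w w') (leqnn _)) c.
- by move=> x /=; rewrite H0.
- by move=> x /=; rewrite H1.
Qed.

Lemma hom_sym i (X Y : dimg) (f g : X -> Y) :
  homotopic i f g -> homotopic i g f.
Proof.
move=> [m [H [Hc H0 H1]]]; exists m, (fun p => H (p.1, rev_ord p.2)); split.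
- move=> [w t] [w' t']; rewrite /= /np_adj /= => /and3P [ww tt c].
  apply: Hc; rewrite /= /np_adj /= ww (inj_eq rev_ord_inj) c andbT /=.
  move: tt; rewrite /iadj /= => /andP [a b].
  have := ltn_ord t; have := ltn_ord t'; lia.
- move=> x /=; rewrite -H1; congr H; congr pair; apply: val_inj => /=; lia.
- move=> x /=; rewrite -H0; congr H; congr pair; apply: val_inj => /=; lia.
Qed.

Lemma hom_trans i (X Y : dimg) (f g h : X -> Y) :
  homotopic i f g -> homotopic i g h -> homotopic i f h.
Proof.
move=> [m1 [H1 [Hc1 H10 H11]]] [m2 [H2 [Hc2 H20 H21]]].
exists (m1 + m2.+1), (fun p => if (val p.2 <= m1)%N then H1 (p.1, inord (val p.2))
                              else H2 (p.1, inord (val p.2 - m1.+1))); split.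
- move=> [x [t ht]] [x' [t' ht']]; rewrite /= /np_adj /= => /and3P [xx tt c].
  move: tt c; rewrite /iadj /= -(inj_eq val_inj) /= => tt c.
  have Kx : forall y, H1 (y, @inord m1 m1) = H2 (y, ord0).
    move=> y; rewrite H20 -H11; congr H1; congr pair; apply: val_inj => /=; rewrite inordK //.
  have E0 : @inord m2 0 = ord0 by apply: val_inj => /=; rewrite inordK.
  case: ifP => a; case: ifP => b.
  + apply: Hc1; rewrite /= /np_adj /= xx /iadj !inordK; try lia.
    rewrite -(inj_eq val_inj) /= !inordK; lia.
  + have -> : t = m1 by lia.
    have -> : (t' - m1.+1 = 0)%N by lia.
    rewrite Kx E0; apply: Hc2; rewrite /= /np_adj /= xx /iadj.
    by rewrite addn0 /=; exact: leq_trans (leq_addr _ _) c.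
  + have -> : t' = m1 by lia.
    have -> : (t - m1.+1 = 0)%N by lia.
    rewrite Kx E0; apply: Hc2; rewrite /= /np_adj /= xx /iadj.
    by rewrite addn0 /=; exact: leq_trans (leq_addr _ _) c.
  + apply: Hc2; rewrite /= /np_adj /= xx /iadj !inordK; try lia.
    rewrite -(inj_eq val_inj) /= !inordK; try lia.
- move=> x /=; rewrite -H10; congr H1; congr pair; apply: val_inj => /=; rewrite inordK //.
- move=> x /=; rewrite ifF; last lia.
  rewrite -H21; congr H2; congr pair; apply: val_inj => /=; rewrite inordK //; lia.
Qed.


Lemma b2le (b1 b2 : bool) : (b1 + b2 <= 2)%N.
Proof. by case: b1; case: b2. Qed.

Lemma hom_left i (hi : (i == 1) || (i == 2)) (X : dimg) (p c : X -> X)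
  (mu : (X * X)%type -> X) : dcont c -> @dcont (NP i X X) X mu ->
  homotopic i p id ->
  @homotopic i (NP i X X) X (fun q => mu (p q.1, c q.2)) (fun q => mu (q.1, c q.2)).
Proof.
move=> cc muc [m [H [Hc H0 H1]]].
exists m, (fun r => mu (H (r.1.1, r.2), c r.1.2)); split; last first.
- by move=> [a b] /=; rewrite H1.
- by move=> [a b] /=; rewrite H0.
move=> [[a b] t] [[a' b'] t']; rewrite /= /np_adj /= => /and3P [/and3P [aa bb cab] tt c0].
move: aa bb cab => /= aa bb cab.
have [h1 h2] : ((a != a') + (t != t') <= i)%N /\
   ((H (a, t) != H (a', t')) + (c b != c b') <= i)%N.
  case/orP: hi => /eqP Ei; subst i; last by split; apply: b2le.
  case: (t =P t') => [<-|ne].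
    rewrite /= addn0; split; first exact: leq_trans (leq_addr _ _) cab.
    exact: leq_trans (leq_add (neq_le (fun a => H (a, t)) a a') (neq_le c b b')) cab.
  move: c0; have -> : (t != t') = true by apply/eqP.
  case: ((a, b) =P (a', b')) => [[<- <-] _|//]; rewrite !eqxx /=; split=> //; by rewrite ?addn0 ?addn0 ?leq_b1.
apply: muc; rewrite /= /np_adj /= (cc _ _ bb) h2 /= andbT.
by apply: Hc; rewrite /= /np_adj /= aa tt h1.
Qed.

Lemma hom_right i (hi : (i == 1) || (i == 2)) (X : dimg) (p c : X -> X)
  (mu : (X * X)%type -> X) : dcont c -> @dcont (NP i X X) X mu ->
  homotopic i p id ->
  @homotopic i (NP i X X) X (fun q => mu (c q.1, p q.2)) (fun q => mu (c q.1, q.2)).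
Proof.
move=> cc muc [m [H [Hc H0 H1]]].
exists m, (fun r => mu (c r.1.1, H (r.1.2, r.2))); split; last first.
- by move=> [a b] /=; rewrite H1.
- by move=> [a b] /=; rewrite H0.
move=> [[a b] t] [[a' b'] t']; rewrite /= /np_adj /= => /and3P [/and3P [aa bb cab] tt c0].
move: aa bb cab => /= aa bb cab.
have [h1 h2] : ((b != b') + (t != t') <= i)%N /\
   ((c a != c a') + (H (b, t) != H (b', t')) <= i)%N.
  case/orP: hi => /eqP Ei; subst i; last by split; apply: b2le.
  case: (t =P t') => [<-|ne].
    rewrite /= addn0; split; first exact: leq_trans (leq_addl _ _) cab.
    exact: leq_trans (leq_add (neq_le c a a') (neq_le (fun b => H (b, t)) b b')) cab.
  move: c0; have -> : (t != t') = true by apply/eqP.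
  case: ((a, b) =P (a', b')) => [[<- <-] _|//]; rewrite !eqxx /=; split=> //; by rewrite ?addn0 ?addn0 ?leq_b1.
apply: muc; rewrite /= /np_adj /= (cc _ _ aa) h2 /= andbT.
by apply: Hc; rewrite /= /np_adj /= bb tt h1.
Qed.

Theorem mainTheorem3 (i : nat) (hi : (i == 1) || (i == 2))
    (X : dimg) (eX : X) (muX : (X * X)%type -> X)
    (HX : is_Hspace i eX muX)
    (Y : dimg) (eY : Y) (f : X -> Y) (g : Y -> X)
    (fc : dcont f) (gc : dcont g) (fp : f eX = eY) (gp : g eY = eX)
    (hgf : homotopic i (g \o f) id) (hfg : homotopic i (f \o g) id) :
  let muY := fun p : (Y * Y)%type => f (muX (g p.1, g p.2)) in
  is_Hspace i eY muY /\ H_equiv_via i eX muX eY muY f g.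
Proof.
move=> muY; case: HX => muc Hr Hl.
have ggc : @dcont (NP i Y Y) (NP i X X) (fun p => (g p.1, g p.2)).
  move=> [a b] [a' b']; rewrite /= /np_adj /= => /and3P [aa bb c].
  rewrite (gc _ _ aa) (gc _ _ bb) /=.
  exact: leq_trans (leq_add (neq_le g a a') (neq_le g b b')) c.
have hc : @dcont (NP i Y Y) X (fun p => muX (g p.1, g p.2)).
  by move=> p q pq; apply: muc; apply: ggc.
have muYc : @dcont (NP i Y Y) Y muY by move=> p q pq; apply: fc; apply: hc.
have idc : forall Z : dimg, dcont (@id Z) by move=> Z.
have gfc : dcont (g \o f) by move=> p q pq; apply: gc; apply: fc.
split; first split.
- exact: muYc.
- apply: hom_trans hfg.
  apply: hom_ext (hom_post fc (hom_pre gc Hr)) _ _ => y //=.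
  by rewrite /muY /= gp.
- apply: hom_trans hfg.
  apply: hom_ext (hom_post fc (hom_pre gc Hl)) _ _ => y //=.
  by rewrite /muY /= gp.
split.
- by [].
- by [].
- by [].
- have A := hom_left hi (idc X) muc hgf.
  have B := hom_right hi gfc muc hgf.
  have C := hom_post fc (hom_sym (hom_trans B A)).
  by apply: hom_ext C _ _ => -[a b].
- have C := hom_pre hc hgf.
  by apply: hom_ext C _ _ => -[a b].
Qed.
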